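(* For every positive integer $n$, $$M_e(\mathcal{D},n)-M_o(\mathcal{D},n)=\begin{cases} 1, & \text{if } n\in\mathcal{P} \text{ and } R(n) \text{ is odd and positive},\\ -1, & \text{if } n\in\mathcal{P} \text{ and } R(n) \text{ is not odd and positive},\\ 2, & \text{if } n\notin\mathcal{P},\ R(\lfloor n\rfloor_p) \text{ is odd and positive, and } n\equiv\lfloor n\rfloor_p \pmod 2,\\ -2, & \text{if } n\notin\mathcal{P},\ R(\lfloor n\rfloor_p) \text{ is even and positive, and } n\equiv\lfloor n\rfloor_p \pmod 2,\\ -2(-1)^{n-\lfloor n\rfloor_p}, & \text{if } n\notin\mathcal{P} \text{ and } R(\lfloor n\rfloor_p) \text{ is even and negative},\\ 0, & \text{otherwise}. \end{cases}$$
   Context: $M_e(\mathcal{D},n)$ (resp. $M_o(\mathcal{D},n)$) is the number of partitions of $n$ into distinct parts with even (resp. odd) crank, where for a partition into distinct parts the crank is its largest part if $1$ is not a part, and is (number of parts) $-2$ if $1$ is a part. $\mathcal{P}=\{m(3m+1)/2: m\in\mathbb{Z}\}$ is the set of (generalized) pentagonal numbers; for $n=m(3m+1)/2\in\mathcal{P}$ put $R(n)=m$ (well defined since distinct integers $m$ give distinct values). $\lfloor n\rfloor_p$ denotes the largest element of $\mathcal{P}$ that is $\le n$. *)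

(* Defs.v *)
From HB Require Import structures.
From mathcomp Require Import all_boot all_order all_algebra.
Set Implicit Arguments. Unset Strict Implicit. Unset Printing Implicit Defensive.
Import Order.TTheory GRing.Theory Num.Theory.

(* A partition of n into distinct parts is a set S of positive integers
   (encoded as elements of 'I_n.+1, all parts are <= n) whose sum is n. *)
Definition distinct_partition (n : nat) (S : {set 'I_n.+1}) : bool :=
  (ord0 \notin S) && (\sum_(i in S) (i : nat) == n)%N.

Definition largest_part (n : nat) (S : {set 'I_n.+1}) : nat := \max_(i in S) (i : nat).
Definition has_one (n : nat) (S : {set 'I_n.+1}) : bool := [exists i in S, (i : nat) == 1%N].

Definition dcrank (n : nat) (S : {set 'I_n.+1}) : int :=
  if has_one S then (Posz #|S| - 2)%R else Posz (largest_part S).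

Definition Me (n : nat) : nat :=
  #|[set S : {set 'I_n.+1} | distinct_partition S & ~~ odd `|dcrank S|%N]|.
Definition Mo (n : nat) : nat :=
  #|[set S : {set 'I_n.+1} | distinct_partition S & odd `|dcrank S|%N]|.

(* generalized pentagonal number m(3m+1)/2, m in Z (always a natural number) *)
Definition pent (m : int) : nat := (`|(m * (3 * m + 1))%R|%N %/ 2)%N.

(* Main.v *)
Require Import Defs.
From mathcomp Require Import all_boot all_order all_algebra.
From mathcomp Require Import zify ring.
Import Order.TTheory GRing.Theory Num.Theory.
Set Implicit Arguments. Unset Strict Implicit. Unset Printing Implicit Defensive.
Definition dpl (l : seq nat) := sorted (fun x y => y < x) l && (0 \notin l).

Lemma dplP l : reflect
  ((forall i, i.+1 < size l -> nth 0 l i.+1 < nth 0 l i) /\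
   (forall i, i < size l -> 0 < nth 0 l i)) (dpl l).
Proof.
apply: (iffP andP) => [[/(sortedP 0) H1 H2]|[H1 H2]]; split => //.
- move=> i Hi; have := mem_nth 0 Hi; case: (nth 0 l i) => // H.
  by rewrite H in H2.
- by apply/(sortedP 0).
- apply/negP => /(nthP 0) [i Hi Hi0]; by move: (H2 _ Hi); rewrite Hi0.
Qed.

Lemma dpl_mono l i j : dpl l -> i < j -> j < size l -> nth 0 l j < nth 0 l i.
Proof.
case/andP => H _ Hij Hj.
have := sorted_ltn_nth (leT := fun x y => y < x) _ 0 H.
move=> /(_ _ i j) -> //.
- by move=> a b c /= h1 h2; apply: ltn_trans h2 h1.
- by rewrite inE; apply: ltn_trans Hj.
Qed.

Lemma dpl_lemono l i j : dpl l -> i <= j -> j < size l -> nth 0 l j <= nth 0 l i.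
Proof.
move=> H; rewrite leq_eqVlt => /orP [/eqP -> //|h] hj.
by apply: ltnW; apply: dpl_mono.
Qed.

Fixpoint run (l : seq nat) : nat :=
  match l with
  | x :: t => match t with
              | y :: _ => if x == y.+1 then (run t).+1 else 1
              | [::] => 1 end
  | [::] => 0 end.

Lemma run_cons x y t :
  run [:: x, y & t] = if x == y.+1 then (run (y :: t)).+1 else 1.
Proof. by []. Qed.

Lemma run_gt0 l : l != [::] -> 0 < run l.
Proof. by case: l => // x [|y t] //=; case: ifP. Qed.

Lemma run_le l : run l <= size l.
Proof.
by elim: l => // x [|y t] IH //=; case: ifP.
Qed.

Lemma run_in l i : i.+1 < run l -> nth 0 l i = (nth 0 l i.+1).+1.
Proof.
elim: l i => // x [|y t] IH i /=; first by case: i.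
case: ifP => [/eqP Hx|_]; last by case: i.
case: i => [|i] /=; first by rewrite Hx.
by rewrite ltnS => /IH.
Qed.

Lemma run_end l : run l < size l -> nth 0 l (run l).-1 != (nth 0 l (run l)).+1.
Proof.
elim: l => // x [|y t] IH; first by [].
rewrite run_cons; case: ifP => [/eqP Hx|/negbT Hx]; last by rewrite /= Hx.
rewrite [size _]/= ltnS => /IH.
have : 0 < run (y :: t) by apply: run_gt0.
by case: (run (y :: t)).
Qed.

Lemma run_ge l k : 0 < k -> k <= size l ->
  (forall i, i.+1 < k -> nth 0 l i = (nth 0 l i.+1).+1) -> k <= run l.
Proof.
move=> Hk Hks H; rewrite leqNgt; apply/negP => Hlt.
have Hl : l != [::].
  by apply/eqP => El; move: Hks Hk; rewrite El /= leqn0 => /eqP ->.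
have Hr := run_gt0 Hl.
have := run_end (leq_trans Hlt Hks).
have -> := H (run l).-1; first by rewrite prednK // eqxx.
by rewrite prednK.
Qed.

Lemma run_eq l k : 0 < k -> k <= size l ->
  (forall i, i.+1 < k -> nth 0 l i = (nth 0 l i.+1).+1) ->
  (k < size l -> nth 0 l k.-1 != (nth 0 l k).+1) -> run l = k.
Proof.
move=> Hk Hks H1 H2; apply/eqP; rewrite eqn_leq run_ge // andbT.
rewrite leqNgt; apply/negP => Hlt.
have := H2 (leq_trans Hlt (run_le l)).
by rewrite (run_in (i := k.-1)) ?prednK // eqxx.
Qed.
Definition lastp l := nth 0 l (size l).-1.
Definition exc l := (run l == size l) && ((lastp l == size l) || (lastp l == (size l).+1)).
Definition FA l := mkseq (fun i => nth 0 l i + (i < lastp l)) (size l).-1.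
Definition FB l := mkseq (fun i => if i < size l then nth 0 l i - (i < run l) else run l) (size l).+1.
Definition Fr l := if (l == [::]) || exc l then l else if lastp l <= run l then FA l else FB l.

Lemma sumn_mkseq f m : sumn (mkseq f m) = \sum_(i < m) f i.
Proof. by rewrite /mkseq sumnE big_map -(big_mkord xpredT) /index_iota subn0. Qed.

Lemma sumn_nth l : sumn l = \sum_(i < size l) nth 0 l i.
Proof. by rewrite -{1}(mkseq_nth 0 l) sumn_mkseq. Qed.

Lemma sum_ltn m s : s <= m -> \sum_(i < m) (i < s) = s.
Proof.
elim: m => [|m IH]; first by rewrite leqn0 => /eqP ->; rewrite big_ord0.
rewrite big_ord_recr /= leq_eqVlt => /orP [/eqP Es|Hs].
  subst s; rewrite leqnn addn1; congr S.
  transitivity (\sum_(i < m) 1).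
    by apply: eq_bigr => i _; rewrite ltnS ltnW.
  by rewrite sum1_card card_ord.
rewrite IH; lia.
Qed.

Lemma big_ord_recp (f : nat -> nat) m : 0 < m ->
  \sum_(i < m) f i = \sum_(i < m.-1) f i + f m.-1.
Proof. by case: m => // m _; rewrite big_ord_recr. Qed.

Section FA.
Variable l : seq nat.
Hypotheses (Hd : dpl l) (Hn : l != [::]) (He : ~~ exc l) (Hc : lastp l <= run l).
Let r := size l.
Let s := lastp l.
Let sg := run l.

Lemma FA_r : 0 < r. Proof. by rewrite /r lt0n size_eq0. Qed.
Lemma FA_s : 0 < s.
Proof. by case/dplP: Hd => _ H; apply: H; rewrite /r prednK // FA_r. Qed.
Lemma FA_sr : s < r.
Proof.
have := run_le l; rewrite -/r -/sg => Hsg.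
rewrite ltn_neqAle (leq_trans Hc Hsg) andbT; apply/eqP => Hsr.
move: He; rewrite /exc -/s -/r -/sg Hsr eqxx orTb andbT.
have -> : sg = r by move: Hc Hsg; rewrite -/s -/sg Hsr; lia.
by rewrite eqxx.
Qed.

Lemma FA_nth i : i < r.-1 -> nth 0 (FA l) i = nth 0 l i + (i < s).
Proof. by move=> Hi; rewrite /FA nth_mkseq. Qed.

Lemma FA_size : size (FA l) = r.-1.
Proof. by rewrite size_mkseq. Qed.

Lemma FA_dpl : dpl (FA l).
Proof.
case/dplP: Hd => H1 H2; apply/dplP; rewrite FA_size; split.
- move=> i Hi; rewrite !FA_nth //; last by apply: ltnW.
  have := H1 i (leq_trans Hi (leq_pred r)); lia.
- move=> i Hi; rewrite FA_nth //; have := H2 i (leq_trans Hi (leq_pred r)); lia.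
Qed.

Lemma FA_sum : sumn (FA l) = sumn l.
Proof.
rewrite /FA sumn_mkseq (sumn_nth l) -/r big_split /= sum_ltn; last first.
  by have := FA_sr; lia.
have Hr := FA_r; rewrite (big_ord_recp _ Hr).
by rewrite /s /lastp -/r.
Qed.

Lemma FA_head : nth 0 (FA l) 0 = (nth 0 l 0).+1.
Proof.
have := FA_sr; have := FA_s => h1 h2.
rewrite FA_nth; last by lia.
by rewrite h1 addn1.
Qed.

Lemma FA_run : run (FA l) = s.
Proof.
have := FA_sr; have := FA_s => h1 h2.
case/dplP: Hd => H1 H2.
apply: run_eq => //; rewrite ?FA_size.
- by lia.
- move=> i Hi; rewrite !FA_nth; try lia.
  rewrite (run_in (l := l) (i := i)); last by apply: leq_trans Hi Hc.
  lia.
- move=> Hs; rewrite !FA_nth; try lia.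
  have := H1 s.-1; rewrite prednK // => /(_ ltac:(lia)).
  lia.
Qed.

Lemma FA_lastp : lastp (FA l) = nth 0 l r.-2 + (r.-2 < s).
Proof.
have := FA_sr; have := FA_s => h1 h2.
by rewrite /lastp FA_size FA_nth; last by lia.
Qed.

Lemma FA_lastp_gt : s < lastp (FA l).
Proof.
have := FA_sr; have := FA_s => h1 h2.
case/dplP: Hd => H1 H2.
rewrite FA_lastp; have := H1 r.-2; rewrite -/r.
have -> : r.-2.+1 = r.-1 by lia.
move=> /(_ (ltac:(lia))); rewrite -/(lastp l) -/s; lia.
Qed.

Lemma FA_Fr : Fr (FA l) = l.
Proof.
have := FA_sr; have := FA_s => h1 h2.
have Hgt := FA_lastp_gt.
rewrite /Fr.
have -> : (FA l == [::]) = false.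
  by apply/negbTE; rewrite -size_eq0 FA_size; lia.
have -> : exc (FA l) = false.
  rewrite /exc FA_run FA_size; apply/negbTE; apply/nandP.
  case: (boolP (s == r.-1)) => [/eqP Es|]; last by left.
  right; rewrite FA_lastp.
  have := (dpl_mono (i := r.-2) (j := r.-1) Hd); rewrite -/r.
  move=> /(_ ltac:(lia) ltac:(lia)); rewrite -/(lastp l) -/s; lia.
rewrite FA_run leqNgt Hgt /=.
apply: (@eq_from_nth _ 0); first by rewrite size_mkseq FA_size; lia.
move=> i; rewrite size_mkseq FA_size => Hi; rewrite nth_mkseq; last by rewrite FA_size.
rewrite FA_size.
case: ifP => Hir.
  rewrite FA_run FA_nth //; lia.
have -> : i = r.-1 by lia.
by rewrite FA_run.
Qed.
End FA.
Section FB.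
Variable l : seq nat.
Hypotheses (Hd : dpl l) (Hn : l != [::]) (He : ~~ exc l) (Hc : run l < lastp l).
Let r := size l.
Let s := lastp l.
Let sg := run l.

Lemma FB_r : 0 < r. Proof. by rewrite /r lt0n size_eq0. Qed.
Lemma FB_sg : 0 < sg. Proof. exact: run_gt0. Qed.
Lemma FB_sgr : sg <= r. Proof. exact: run_le. Qed.
Lemma FB_ge i : i < r -> s <= nth 0 l i.
Proof.
move=> Hi; apply: dpl_lemono => //; rewrite -/r; lia.
Qed.
Lemma FB_case : sg < r \/ r.+1 < s.
Proof.
have := FB_sgr; rewrite leq_eqVlt => /orP [/eqP E|]; last by left.
right; move: He; rewrite /exc -/sg -/r -/s E eqxx /=.
move: Hc; rewrite -/sg -/s E; lia.
Qed.

Lemma FB_size : size (FB l) = r.+1.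
Proof. by rewrite size_mkseq. Qed.

Lemma FB_nth i : i < r -> nth 0 (FB l) i = nth 0 l i - (i < sg).
Proof. by move=> Hi; rewrite /FB nth_mkseq ?Hi //; apply: ltnW. Qed.

Lemma FB_nthr : nth 0 (FB l) r = sg.
Proof. by rewrite /FB nth_mkseq // ltnn. Qed.

Lemma FB_dpl : dpl (FB l).
Proof.
have := FB_sg; have := FB_sgr; have := FB_case => hc h1 h2.
move: Hc; rewrite -/sg -/s => hcs.
case/dplP: Hd => H1 H2; apply/dplP; rewrite FB_size; split.
- move=> i; rewrite ltnS leq_eqVlt => /orP [/eqP Ei|Hi].
    have Hli : nth 0 l i = s by rewrite /s /lastp -/r -Ei.
    rewrite Ei FB_nthr FB_nth; last lia.
    rewrite Hli; case: hc => hc; lia.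
  rewrite !FB_nth //; last by apply: ltnW.
  have := H1 i Hi; have := FB_ge Hi => hs hi.
  case: (ltngtP i.+1 sg) => Hs.
  + lia.
  + lia.
  + have := @run_end l; rewrite -/sg -/r -Hs /= => /(_ ltac:(lia)) hne. lia.
- move=> i; rewrite ltnS leq_eqVlt => /orP [/eqP ->|Hi].
    by rewrite FB_nthr.
  rewrite FB_nth //; have := FB_ge Hi; lia.
Qed.

Lemma FB_sum : sumn (FB l) = sumn l.
Proof.
have := FB_sg; have := FB_sgr => h1 h2.
rewrite /FB sumn_mkseq big_ord_recr /= ltnn (sumn_nth l) -/r -/sg.
have E : \sum_(i < r) nth 0 l i = \sum_(i < r) ((nth 0 l i - (i < sg)) + (i < sg)).
  apply: eq_bigr => i _; rewrite subnK //.
  have := FB_ge (ltn_ord i); move: Hc; rewrite -/sg -/s; lia.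
rewrite E big_split /= sum_ltn //.
transitivity (\sum_(i < r) (nth 0 l i - (i < sg)) + sg); last by [].
congr (_ + _); apply: eq_bigr => i _; by rewrite ltn_ord.
Qed.

Lemma FB_head : nth 0 (FB l) 0 = (nth 0 l 0).-1.
Proof.
have := FB_sg; have := FB_r => h1 h2.
by rewrite FB_nth // h2 subn1.
Qed.

Lemma FB_lastp : lastp (FB l) = sg.
Proof. by rewrite /lastp FB_size FB_nthr. Qed.

Lemma FB_run : sg <= run (FB l).
Proof.
have := FB_sg; have := FB_sgr => h1 h2.
apply: run_ge => //; rewrite ?FB_size; first lia.
move=> i Hi; rewrite !FB_nth; try lia.
rewrite (run_in (l := l) (i := i)) //.
have := FB_ge (i := i.+1) ltac:(lia); move: Hc; rewrite -/sg -/s; lia.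
Qed.

Lemma FB_Fr : Fr (FB l) = l.
Proof.
have := FB_sg; have := FB_sgr => h1 h2.
have Hr := FB_run.
rewrite /Fr.
have -> : (FB l == [::]) = false by apply/negbTE; rewrite -size_eq0 FB_size.
have -> : exc (FB l) = false.
  rewrite /exc FB_lastp FB_size; apply/negbTE; apply/nandP; right.
  apply/negP => /orP [] /eqP; lia.
rewrite FB_lastp Hr.
apply: (@eq_from_nth _ 0); first by rewrite size_mkseq FB_size.
move=> i; rewrite size_mkseq FB_size => Hi.
rewrite nth_mkseq; last by rewrite FB_size.
rewrite FB_lastp FB_nth //.
have := FB_ge Hi; move: Hc; rewrite -/sg -/s; lia.
Qed.
End FB.
Lemma Fr_nil_exc l : (l == [::]) || exc l -> Fr l = l.
Proof. by rewrite /Fr => ->. Qed.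

Lemma Fr_props l : dpl l -> ~~ ((l == [::]) || exc l) ->
  [/\ dpl (Fr l), sumn (Fr l) = sumn l, Fr (Fr l) = l,
      odd (size (Fr l)) = ~~ odd (size l) &
      odd (nth 0 (Fr l) 0) = ~~ odd (nth 0 l 0)].
Proof.
move=> Hd; rewrite negb_or => /andP [Hn He].
have Hf : Fr l = if lastp l <= run l then FA l else FB l.
  by rewrite /Fr (negbTE Hn) (negbTE He).
rewrite Hf; case: ifP => Hc.
- have h2 : lastp l < size l by apply: FA_sr.
  split.
  + by apply: FA_dpl.
  + by apply: FA_sum.
  + by apply: FA_Fr.
  + rewrite FA_size //; case: (size l) h2 => // r _ /=; by rewrite negbK.
  + by rewrite FA_head //= negbK.
- have Hc' : run l < lastp l by rewrite ltnNge Hc.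
  split.
  + by apply: FB_dpl.
  + by apply: FB_sum.
  + by apply: FB_Fr.
  + by rewrite FB_size //= negbK.
  + rewrite FB_head //.
    have : 0 < nth 0 l 0.
      by case/dplP: Hd => _; apply; rewrite lt0n size_eq0.
    by case: (nth 0 l 0) => // k _ /=; rewrite negbK.
Qed.

Lemma Fr_dpl l : dpl l -> dpl (Fr l).
Proof.
move=> Hd; case: (boolP ((l == [::]) || exc l)) => H.
  by rewrite Fr_nil_exc.
by case: (Fr_props Hd H).
Qed.

Lemma Fr_sum l : dpl l -> sumn (Fr l) = sumn l.
Proof.
move=> Hd; case: (boolP ((l == [::]) || exc l)) => H.
  by rewrite Fr_nil_exc.
by case: (Fr_props Hd H).
Qed.

Lemma Fr_inv l : dpl l -> Fr (Fr l) = l.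
Proof.
move=> Hd; case: (boolP ((l == [::]) || exc l)) => H.
  by rewrite !Fr_nil_exc.
by case: (Fr_props Hd H).
Qed.

Lemma Fr_fix l : dpl l -> (Fr l == l) = (l == [::]) || exc l.
Proof.
move=> Hd; case: (boolP ((l == [::]) || exc l)) => H.
  by rewrite Fr_nil_exc // eqxx.
case: (Fr_props Hd H) => _ _ _ Hs _; apply/negbTE; apply/negP => /eqP E.
by move: Hs; rewrite E; case: (odd _).
Qed.

Lemma Fr_sign l : dpl l -> Fr l != l ->
  odd (size (Fr l)) = ~~ odd (size l) /\ odd (nth 0 (Fr l) 0) = ~~ odd (nth 0 l 0).
Proof.
move=> Hd; rewrite Fr_fix // => H.
by case: (Fr_props Hd H).
Qed.

Lemma invol_sum (T : eqType) (U : seq T) (F : T -> T) (w : T -> int) :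
  uniq U -> {in U, forall x, F x \in U} -> {in U, forall x, F (F x) = x} ->
  {in U, forall x, F x != x -> w (F x) = (- w x)%R} ->
  (\sum_(x <- U) w x = \sum_(x <- U | F x == x) w x)%R.
Proof.
move=> HU HF HFF Hw.
rewrite (bigID (fun x => F x == x)) /=.
set S := (\sum_(x <- U | F x != x) w x)%R.
suff -> : S = 0%R by rewrite addr0.
set V := [seq x <- U | F x != x].
have HS : S = (\sum_(x <- V) w x)%R by rewrite big_filter.
have HV : {in V, forall x, F x \in V}.
  move=> x; rewrite mem_filter => /andP [Hx HxU].
  by rewrite mem_filter (HF _ HxU) (HFF _ HxU) andbT eq_sym.
have Hp : perm_eq [seq F x | x <- V] V.
  apply: uniq_perm; last 1 first.
  - move=> y; apply/mapP/idP => [[x Hx ->]|Hy]; first exact: HV.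
    exists (F y); first exact: HV.
    by move: Hy; rewrite mem_filter => /andP [_ /HFF ->].
  - rewrite map_inj_in_uniq; first by rewrite filter_uniq.
    move=> x y; rewrite !mem_filter => /andP [_ Hx] /andP [_ Hy] E.
    by rewrite -(HFF _ Hx) E HFF.
  - by rewrite filter_uniq.
have : S = (- S)%R.
  rewrite {1}HS -(perm_big _ Hp) big_map HS -sumrN.
  apply: eq_big_seq => x; rewrite mem_filter => /andP [H1 H2].
  by apply: Hw.
lia.
Qed.

Definition Ej (j : nat) := mkseq (fun i => j - i) (j.+1)./2.
Definition P (j : nat) := sumn (Ej j).

Lemma Ej_size j : size (Ej j) = (j.+1)./2.
Proof. by rewrite size_mkseq. Qed.

Lemma half_le j : (j.+1)./2 <= j.+1.
Proof. lia. Qed.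

Lemma Ej_nth j i : i < (j.+1)./2 -> nth 0 (Ej j) i = j - i.
Proof. by move=> Hi; rewrite nth_mkseq. Qed.

Lemma Ej_head j : nth 0 (Ej j) 0 = j.
Proof.
case: j => // j; rewrite Ej_nth ?subn0 //; lia.
Qed.

Lemma Ej_dpl j : dpl (Ej j).
Proof.
apply/dplP; rewrite Ej_size; split => i Hi; rewrite !Ej_nth; lia.
Qed.

Lemma Ej_exc j : (Ej j == [::]) || exc (Ej j).
Proof.
case: j => [//|j]; apply/orP; right.
have Hr : run (Ej j.+1) = size (Ej j.+1).
  apply: run_eq => //; rewrite ?Ej_size; try lia.
  move=> i Hi; rewrite !Ej_nth; lia.
rewrite /exc Hr eqxx andTb /lastp Ej_size Ej_nth; last lia.
case: (boolP (odd j)) => Ho; apply/orP; [right|left]; apply/eqP; lia.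
Qed.

Lemma Ej_Fr j : Fr (Ej j) = Ej j.
Proof. exact: Fr_nil_exc (Ej_exc j). Qed.

Lemma run_full l : run l = size l -> forall k, k < size l ->
  nth 0 l ((size l).-1 - k) = lastp l + k.
Proof.
move=> Hr; elim => [|k IH] Hk; first by rewrite subn0 addn0.
rewrite (run_in (i := (size l).-1 - k.+1)); last by rewrite Hr; lia.
have -> : ((size l).-1 - k.+1).+1 = (size l).-1 - k by lia.
by rewrite IH ?addnS //; lia.
Qed.

Lemma exc_Ej l : dpl l -> exc l -> exists j, l = Ej j.
Proof.
move=> Hd /andP [/eqP Hr Hs].
set r := size l in Hr Hs.
exists (if lastp l == r then r.*2.-1 else r.*2).
have Hn := run_full Hr.
apply: (@eq_from_nth _ 0).
  rewrite Ej_size; case: ifP => _; lia.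
move=> i Hi; rewrite Ej_nth; last by case: ifP => _; lia.
have := Hn ((size l).-1 - i) ltac:(lia).
have -> : (size l).-1 - ((size l).-1 - i) = i by lia.
move=> ->; move: Hs; rewrite -/r; case: ifP => /eqP H1 H2; lia.
Qed.

Lemma sumn_mkseqN f m : sumn (mkseq f m) = \sum_(0 <= i < m) f i.
Proof. by rewrite /mkseq sumnE big_map /index_iota subn0. Qed.

Lemma P_S j : P j.+1 = P j + (if odd j then (j.+1)./2 else j.+1).
Proof.
rewrite /P /Ej !sumn_mkseqN.
case: (boolP (odd j)) => Ho.
- have -> : (j.+2)./2 = (j.+1)./2 by move: Ho; lia.
  have -> : \sum_(0 <= i < (j.+1)./2) (j.+1 - i) =
            \sum_(0 <= i < (j.+1)./2) ((j - i) + 1).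
    apply: eq_big_nat => i /andP [_ Hi]; lia.
  by rewrite big_split /= sum_nat_const_nat muln1 subn0.
- have -> : (j.+2)./2 = ((j.+1)./2).+1 by move: Ho; lia.
  rewrite big_nat_recl // subn0 addnC; congr (_ + _).
Qed.

Lemma P_lt j : P j < P j.+1.
Proof. rewrite P_S; case: ifP => Ho; lia. Qed.

Lemma P_homo : {homo P : i j / i < j}.
Proof. apply: homo_ltn => //; [exact: ltn_trans | exact: P_lt]. Qed.

Lemma P_leq : {mono P : i j / i <= j}.
Proof. exact: leq_mono P_homo. Qed.

Lemma P_ltn i j : (P i < P j) = (i < j).
Proof. by rewrite !ltnNge P_leq. Qed.

Lemma P_inj : injective P.
Proof. exact: incn_inj P_leq. Qed.

Lemma P_ge j : j <= P j.
Proof. elim: j => // j IH; have := P_lt j; lia. Qed.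
Section Lst.
Variable n : nat.
Implicit Types A : {set 'I_n.+1}.

Definition lst A : seq nat := rev [seq k <- iota 0 n.+1 | inord k \in A].

Lemma mem_lst A k : (k \in lst A) = (k <= n) && (inord k \in A).
Proof. by rewrite mem_rev mem_filter mem_iota /= add0n ltnS andbC. Qed.

Lemma mem_lst_ord A (i : 'I_n.+1) : (val i \in lst A) = (i \in A).
Proof. by rewrite mem_lst inord_val -ltnS ltn_ord. Qed.

Lemma lst_sorted A : sorted (fun x y => y < x) (lst A).
Proof.
rewrite rev_sorted; apply: sorted_filter; first exact: ltn_trans.
exact: iota_ltn_sorted.
Qed.

Lemma big_lst (R : Type) (idx : R) (op : Monoid.com_law idx) (F : nat -> R) A :
  \big[op/idx]_(i in A) F (val i) = \big[op/idx]_(k <- lst A) F k.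
Proof.
have Hp (s : seq nat) : perm_eq (rev s) s by rewrite perm_rev.
rewrite /lst (perm_big _ (Hp _)) big_filter.
rewrite -[iota 0 n.+1]/(index_iota 0 n.+1) big_mkord.
by apply: eq_bigl => i; rewrite inord_val.
Qed.

Lemma lst_inj : injective lst.
Proof.
by move=> A1 A2 E; apply/setP => i; rewrite -!mem_lst_ord E.
Qed.

End Lst.

Lemma elem_le_sumn (l : seq nat) k : k \in l -> k <= sumn l.
Proof.
elim: l => // x t IH; rewrite inE => /orP [/eqP ->|/IH]; first exact: leq_addr.
by move=> H; apply: leq_trans H (leq_addl _ _).
Qed.

Definition Pset n := [set A : {set 'I_n.+1} | distinct_partition A].
Definition U n : seq (seq nat) := [seq lst A | A <- enum (Pset n)].

Lemma gt_trans : transitive (fun x y : nat => y < x).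
Proof. by move=> a b c /= h1 h2; apply: ltn_trans h2 h1. Qed.

Lemma gt_irr : irreflexive (fun x y : nat => y < x).
Proof. by move=> x; rewrite /= ltnn. Qed.

Lemma lst_sumn n (A : {set 'I_n.+1}) : sumn (lst A) = \sum_(i in A) (i : nat).
Proof. by rewrite sumnE -big_lst. Qed.

Lemma mem_U n l : (l \in U n) = dpl l && (sumn l == n).
Proof.
apply/mapP/andP => [[A HS ->]|[Hd /eqP Hs]].
- move: HS; rewrite mem_enum inE /distinct_partition => /andP [H0 /eqP Hs].
  split; last by rewrite lst_sumn Hs.
  rewrite /dpl lst_sorted /= mem_lst /=.
  by have -> : inord 0 = ord0 :> 'I_n.+1 by apply: val_inj; rewrite /= inordK.
- set A := [set i : 'I_n.+1 | val i \in l].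
  have HlS : lst A = l.
    apply: (irr_sorted_eq gt_trans gt_irr); first exact: lst_sorted.
      by case/andP: Hd.
    move=> k; rewrite mem_lst inE.
    case: (boolP (k <= n)) => Hk /=; first by rewrite inordK.
    apply/esym/negbTE; apply: contra Hk => Hk.
    by rewrite -Hs; apply: elem_le_sumn.
  exists A => //.
  rewrite mem_enum !inE /distinct_partition -lst_sumn HlS Hs eqxx andbT.
  by rewrite inE /=; case/andP: Hd.
Qed.

Lemma U_uniq n : uniq (U n).
Proof.
rewrite map_inj_uniq ?enum_uniq //; exact: lst_inj.
Qed.

Lemma big_U n (g : seq nat -> int) :
  (\sum_(A : {set 'I_n.+1} | distinct_partition A) g (lst A))%R =
  (\sum_(l <- U n) g l)%R.
Proof.
rewrite /U big_map big_enum /=; apply: eq_bigl => A; by rewrite inE.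
Qed.
Definition cw (l : seq nat) : int :=
  if 1 \in l then ((-1) ^+ size l)%R else ((-1) ^+ nth 0 l 0)%R.

Lemma max_sorted (l : seq nat) : sorted (fun x y => y < x) l -> \max_(k <- l) k = nth 0 l 0.
Proof.
elim: l => [|x t IH] /=; first by rewrite big_nil.
rewrite big_cons; case: t IH => [|y t] IH /=; first by rewrite big_nil maxn0.
move=> /andP [Hxy Hp]; rewrite IH //; apply/maxn_idPl; exact: ltnW.
Qed.

Lemma odd_absz_sub2 a : odd `|(Posz a - 2)%R|%N = odd a.
Proof.
case: a => [|[|a]] //.
have -> : (Posz a.+2 - 2)%R = Posz a by rewrite -addn2 PoszD addrK.
by rewrite /= negbK.
Qed.

Lemma sign_odd (b : nat) : ((-1) ^+ b = (-1) ^+ odd b :> int)%R.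
Proof. by rewrite -signr_odd. Qed.

Lemma crank_cw n (A : {set 'I_n.+1}) :
  ((-1) ^+ odd `|dcrank A|%N)%R = cw (lst A).
Proof.
have Hone : has_one A = (1 \in lst A).
  rewrite mem_lst; apply/existsP/andP => [[i /andP [Hi /eqP Hi1]]|[H1 H2]].
    split; first by rewrite -ltnS -Hi1 ltn_ord.
    by have -> : inord 1 = i by apply: val_inj; rewrite /= inordK // -Hi1 ltn_ord.
  by exists (inord 1); rewrite H2 /= inordK.
have Hcard : #|A| = size (lst A).
  by rewrite -sum1_card -sum1_size (big_lst _ (fun _ => 1%N)).
have Hmax : largest_part A = nth 0 (lst A) 0.
  by rewrite /largest_part (big_lst _ id) max_sorted // lst_sorted.
rewrite /dcrank /cw Hone; case: ifP => _.
  by rewrite odd_absz_sub2 Hcard -sign_odd.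
by rewrite Hmax /= -sign_odd.
Qed.

Lemma D_U n : (Posz (Me n) - Posz (Mo n))%R = (\sum_(l <- U n) cw l)%R.
Proof.
rewrite -big_U.
rewrite (bigID (fun A => odd `|dcrank A|%N)) /= addrC.
have E1 : Posz (Me n) = (\sum_(A : {set 'I_n.+1} | distinct_partition A && ~~ odd `|dcrank A|%N) ((-1) ^+ odd `|dcrank A|%N))%R.
  transitivity (\sum_(A : {set 'I_n.+1} | distinct_partition A && ~~ odd `|dcrank A|%N) (1 : int))%R; last first.
    by apply: eq_bigr => A /andP [_ /negbTE ->]; rewrite expr0.
  rewrite (eq_bigl (mem [set A | distinct_partition A & ~~ odd `|dcrank A|%N])); last first.
    by move=> A; rewrite !inE.
  by rewrite sumr_const natz.
have E2 : Posz (Mo n) = (- \sum_(A : {set 'I_n.+1} | distinct_partition A && odd `|dcrank A|%N) ((-1) ^+ odd `|dcrank A|%N))%R.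
  transitivity (- \sum_(A : {set 'I_n.+1} | distinct_partition A && odd `|dcrank A|%N) (-1 : int))%R; last first.
    by congr (- _)%R; apply: eq_bigr => A /andP [_ ->]; rewrite expr1.
  rewrite sumrN opprK.
  rewrite (eq_bigl (mem [set A | distinct_partition A & odd `|dcrank A|%N])); last first.
    by move=> A; rewrite !inE.
  by rewrite sumr_const natz.
rewrite E1 E2 opprK; congr (_ + _)%R; apply: eq_bigr => A _; exact: crank_cw.
Qed.
Lemma dpl_rcons1 l : dpl l -> 1%N \notin l -> dpl (rcons l 1%N).
Proof.
case/dplP => H1 H2 H1l; apply/dplP; rewrite size_rcons; split.
- move=> i Hi; rewrite !nth_rcons.
  case: (ltngtP i.+1 (size l)) => Hc.
  + exact: H1.
  + lia.
  + have Hm : nth 0 l i \in l by apply: mem_nth; rewrite -Hc.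
    have := H2 i; rewrite -Hc => /(_ (ltnSn _)) Hp.
    move: Hp; case E: (nth 0 l i) => [|[|k]] //.
    by rewrite E in Hm; rewrite Hm in H1l.
- move=> i Hi; rewrite nth_rcons; case: ifP => Hc; first exact: H2.
  case: ifP => // H3; move/negbT: Hc; move/negbT: H3; lia.
Qed.

Lemma dpl_rcons_inv l : dpl l -> 1%N \in l ->
  exists2 l', l = rcons l' 1%N & dpl l' && (1%N \notin l').
Proof.
case/lastP: l => [//|l x] Hd H1.
case/dplP: (Hd) => H1' H2'.
have Hlt : forall y, y \in l -> x < y.
  move=> y /(nthP 0) [i Hi <-].
  have := dpl_mono (i := i) (j := size l) Hd Hi; rewrite size_rcons ltnSn.
  by rewrite !nth_rcons ltnn eqxx Hi => /(_ isT).
have Hx : 0 < x.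
  by have := H2' (size l); rewrite size_rcons ltnSn nth_rcons ltnn eqxx => /(_ isT).
have Ex : x = 1%N.
  move: H1; rewrite mem_rcons inE => /orP [/eqP -> //|/Hlt]; lia.
subst x; exists l => //; apply/andP; split; last first.
  by apply/negP => /Hlt.
apply/dplP; split.
- move=> i Hi; have := H1' i; rewrite size_rcons !nth_rcons Hi (ltn_trans (ltnSn _) Hi).
  by apply; apply: ltn_trans Hi _.
- move=> i Hi; have := H2' i; rewrite size_rcons !nth_rcons Hi.
  by apply; apply: ltn_trans Hi _.
Qed.

Local Open Scope ring_scope.

Definition Xn n : int := \sum_(l <- U n) (-1) ^+ nth 0%N l 0%N.
Definition Yn n : int := \sum_(l <- U n) (-1) ^+ size l.
Definition Af n : int := \sum_(l <- U n | 1%N \notin l) (-1) ^+ nth 0%N l 0%N.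
Definition Ff n : int := \sum_(l <- U n | 1%N \notin l) (-1) ^+ size l.

Lemma sign_neg (a b : nat) : odd b = ~~ odd a -> (-1) ^+ b = - (-1) ^+ a :> int.
Proof. by move=> H; rewrite sign_odd [in RHS]sign_odd H; case: (odd a). Qed.

Lemma sum_split (T : Type) (s : seq T) (P : pred T) (F : T -> int) :
  \sum_(x <- s) F x = \sum_(x <- s | P x) F x + \sum_(x <- s | ~~ P x) F x.
Proof. exact: bigID. Qed.

Lemma rcons_split n (g : seq nat -> int) :
  \sum_(l <- U n.+1 | 1%N \in l) g l = \sum_(l <- U n | 1%N \notin l) g (rcons l 1%N).
Proof.
rewrite -big_filter -[RHS]big_filter -[RHS](big_map (rcons^~ 1%N) xpredT).
apply: perm_big; apply: uniq_perm.
- by rewrite filter_uniq // U_uniq.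
- rewrite map_inj_uniq ?filter_uniq ?U_uniq //; exact: rcons_injl.
move=> l; rewrite mem_filter mem_U; apply/andP/mapP => [[H1 /andP [Hd Hs]]|[l' Hl' ->]].
- case: (dpl_rcons_inv Hd H1) => l' El /andP [Hd' H1'].
  exists l' => //; rewrite mem_filter H1' mem_U Hd' /=.
  by move: Hs; rewrite El sumn_rcons addn1.
- move: Hl'; rewrite mem_filter mem_U => /andP [H1 /andP [Hd /eqP Hs]].
  split; first by rewrite mem_rcons inE eqxx.
  by rewrite dpl_rcons1 // sumn_rcons Hs addn1 /=.
Qed.

Lemma U0 : perm_eq (U 0) [:: [::]].
Proof.
apply: uniq_perm => //; first exact: U_uniq.
move=> l; rewrite mem_U inE; apply/andP/eqP => [[/dplP [_ H2] Hs]|->] //.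
case: l H2 Hs => [//|x t] H2 /=; rewrite addn_eq0 => /andP [/eqP Hx _].
by have := H2 0%N isT; rewrite /= Hx.
Qed.

Lemma U_nonnil n l : l \in U n.+1 -> l != [::].
Proof. by rewrite mem_U => /andP [_]; case: l. Qed.

Lemma Yn_S n : Yn n.+1 = Ff n.+1 - Ff n.
Proof.
rewrite /Yn (sum_split _ (fun l => 1%N \in l)) rcons_split addrC /Ff.
congr (_ + _); rewrite -sumrN; apply: eq_bigr => l _.
by rewrite size_rcons exprS mulN1r.
Qed.

Lemma Xn_SS n : Xn n.+2 = Af n.+2 + Af n.+1.
Proof.
rewrite /Xn (sum_split _ (fun l => 1%N \in l)) rcons_split addrC /Af.
congr (_ + _); rewrite -[LHS]big_filter -[RHS]big_filter; apply: eq_big_seq => l; rewrite mem_filter => /andP [_ Hl].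
rewrite nth_rcons; case: ifP => // H.
by move: (U_nonnil Hl); case: l H {Hl}.
Qed.

Lemma Af0 : Af 0 = 1.
Proof. by rewrite /Af (perm_big _ U0) big_cons big_nil /= addr0. Qed.
Lemma Ff0 : Ff 0 = 1.
Proof. by rewrite /Ff (perm_big _ U0) big_cons big_nil /= addr0. Qed.

Lemma Xn_1 : Xn 1 = Af 1 - 1.
Proof.
rewrite /Xn (sum_split _ (fun l => 1%N \in l)) rcons_split addrC /Af.
by congr (_ + _); rewrite (perm_big _ U0) big_cons big_nil /= addr0.
Qed.

Lemma D_S n : (\sum_(l <- U n.+1) cw l) = Af n.+1 - Ff n.
Proof.
rewrite (sum_split _ (fun l => 1%N \in l)) addrC /Af /Ff.
have -> : \sum_(l <- U n.+1 | 1%N \in l) cw l = \sum_(l <- U n.+1 | 1%N \in l) (-1) ^+ size l.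
  by apply: eq_bigr => l H; rewrite /cw H.
have -> : \sum_(l <- U n.+1 | 1%N \notin l) cw l = \sum_(l <- U n.+1 | 1%N \notin l) (-1) ^+ nth 0%N l 0%N.
  by apply: eq_bigr => l /negbTE H; rewrite /cw H.
rewrite rcons_split; congr (_ + _); rewrite -sumrN; apply: eq_bigr => l _.
by rewrite size_rcons exprS mulN1r.
Qed.

Lemma fixed_perm n : perm_eq [seq l <- U n | Fr l == l]
                             [seq Ej j | j <- [seq j <- iota 0 n.+1 | P j == n]].
Proof.
apply: uniq_perm.
- by rewrite filter_uniq // U_uniq.
- rewrite map_inj_in_uniq ?filter_uniq ?iota_uniq //.
  by move=> i j _ _ E; rewrite -(Ej_head i) E Ej_head.
move=> l; rewrite mem_filter mem_U; apply/andP/mapP.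
- move=> [Hf /andP [Hd /eqP Hs]].
  have [j Ej] : exists j, l = Ej j.
    move: Hf; rewrite Fr_fix // => /orP [/eqP ->|He]; first by exists 0%N.
    exact: exc_Ej.
  exists j => //; rewrite mem_filter mem_iota /= add0n ltnS.
  have HP : P j = n by rewrite -Hs Ej.
  by rewrite HP eqxx -HP P_ge.
- move=> [j]; rewrite mem_filter => /andP [/eqP HP _] ->.
  by rewrite Ej_Fr eqxx Ej_dpl -HP eqxx.
Qed.

Lemma Fr_U n l : l \in U n -> Fr l \in U n.
Proof. rewrite !mem_U => /andP [Hd Hs]; by rewrite Fr_dpl // Fr_sum. Qed.

Lemma Fr_U_inv n l : l \in U n -> Fr (Fr l) = l.
Proof. rewrite mem_U => /andP [Hd _]; exact: Fr_inv. Qed.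

Lemma Xn_P n : Xn n = \sum_(j <- iota 0 n.+1 | P j == n) (-1) ^+ j.
Proof.
rewrite /Xn (invol_sum (F := Fr)) ?U_uniq //; last first.
- move=> l; rewrite mem_U => /andP [Hd _] Hne.
  by case: (Fr_sign Hd Hne) => _ H; apply: sign_neg.
- exact: Fr_U_inv.
- exact: Fr_U.
rewrite -big_filter (perm_big _ (fixed_perm n)) big_map big_filter.
by apply: eq_bigr => j _; rewrite Ej_head.
Qed.

Lemma Yn_P n : Yn n = \sum_(j <- iota 0 n.+1 | P j == n) (-1) ^+ (j.+1)./2.
Proof.
rewrite /Yn (invol_sum (F := Fr)) ?U_uniq //; last first.
- move=> l; rewrite mem_U => /andP [Hd _] Hne.
  by case: (Fr_sign Hd Hne) => H _; apply: sign_neg.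
- exact: Fr_U_inv.
- exact: Fr_U.
rewrite -big_filter (perm_big _ (fixed_perm n)) big_map big_filter.
by apply: eq_bigr => j _; rewrite Ej_size.
Qed.

Lemma sumP_hit (g : nat -> int) j :
  \sum_(i <- iota 0 (P j).+1 | P i == P j) g i = g j.
Proof.
rewrite (eq_bigl (pred1 j)); last by move=> i; rewrite /= (inj_eq P_inj).
rewrite -big_filter filter_pred1_uniq ?iota_uniq ?big_seq1 //.
by rewrite mem_iota /= add0n ltnS P_ge.
Qed.

Lemma sumP_miss (g : nat -> int) n : (forall j, P j != n) ->
  \sum_(i <- iota 0 n.+1 | P i == n) g i = 0.
Proof. by move=> H; rewrite big_pred0 // => i; apply/negbTE. Qed.
Local Open Scope ring_scope.
Definition al (j : nat) : int :=
  if j == 0%N then 1 else if odd j then (if odd (j.+1)./2 then 0 else -2)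
  else (-1) ^+ (j./2).+1.
Definition ph (j : nat) : int := if odd j then 0 else (-1) ^+ (j./2).

Definition sgb (b : bool) : int := if b then -1 else 1.
Lemma sgbE e : (-1) ^+ e = sgb (odd e) :> int.
Proof. by rewrite sign_odd; case: (odd e); rewrite ?expr0 ?expr1. Qed.

Lemma par_cases i : exists k, i = k.*2 \/ i = k.*2.+1.
Proof. exists i./2; case: (boolP (odd i)) => H; [right|left]; lia. Qed.

Lemma L2 i : (0 < i)%N ->
  (-1) ^+ i.+1 - (-1) ^+ ((if odd i then (i.+1)./2 else i.+1) - 1) * al i = al i.+1.
Proof.
move=> Hi; have [k [Ek|Ek]] := par_cases i; subst i; rewrite /al !sgbE.
- have -> : (k.*2 == 0%N) = false by apply/negbTE; lia.
  have -> : (k.*2.+1 == 0%N) = false by [].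
  have -> : odd (k.*2) = false by lia.
  have -> : odd (k.*2.+1) = true by lia.
  have -> : (k.*2.+1 - 1)%N = k.*2 by lia.
  have -> : odd (k.*2) = false by lia.
  have -> : odd (k.*2.+2)./2 = ~~ odd k by lia.
  by case: (odd k).
- have -> : (k.*2.+1 == 0%N) = false by [].
  have -> : (k.*2.+2 == 0%N) = false by [].
  have -> : odd (k.*2.+1) = true by lia.
  have -> : odd (k.*2.+2) = false by lia.
  have -> : ((k.*2.+2)./2 - 1)%N = k by lia.
  have -> : odd (k.*2.+2)./2 = ~~ odd k by lia.
  have -> : odd (k.*2.+2)./2.+1 = odd k by lia.
  by case: (odd k).
Qed.

Lemma L3 i : (-1) ^+ (i.+2)./2 + ph i = ph i.+1.
Proof.
have [k [Ek|Ek]] := par_cases i; subst i; rewrite /ph !sgbE.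
- have -> : odd (k.*2) = false by lia.
  have -> : odd (k.*2.+1) = true by lia.
  have -> : odd (k.*2.+2)./2 = ~~ odd k by lia.
  have -> : odd (k.*2)./2 = odd k by lia.
  by case: (odd k).
- have -> : odd (k.*2.+1) = true by lia.
  have -> : odd (k.*2.+2) = false by lia.
  have -> : odd (k.*2.+3)./2 = ~~ odd k by lia.
  have -> : odd (k.*2.+2)./2 = ~~ odd k by lia.
  by case: (odd k).
Qed.
Local Open Scope ring_scope.
Lemma P0 : P 0 = 0%N. Proof. by []. Qed.
Lemma P1 : P 1 = 1%N. Proof. by []. Qed.

Lemma P_gap i : P i.+1 = (P i + (if odd i then (i.+1)./2 else i.+1))%N.
Proof. exact: P_S. Qed.

Lemma C n : forall j, (P j <= n < P j.+1)%N ->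
  Af n = (-1) ^+ (n - P j) * al j /\ Ff n = ph j.
Proof.
elim: n => [|n IH] j /andP [Hjl Hju].
  have j0 : j = 0%N by have := P_ge j; lia.
  by subst j; rewrite Af0 Ff0.
case: (leqP (P j) n) => Hjn.
-
  have Hmiss : forall i, P i != n.+1.
    move=> i; apply/eqP => Hi.
    have h1 : (P j < P i)%N by rewrite Hi.
    have h2 : (P i < P j.+1)%N by rewrite Hi.
    rewrite !P_ltn in h1 h2; lia.
  have [IHA IHF] := IH j ltac:(lia).
  have HX : Xn n.+1 = 0 by rewrite Xn_P sumP_miss.
  have HY : Yn n.+1 = 0 by rewrite Yn_P sumP_miss.
  split.
  + case: n IH Hjl Hju Hjn IHA IHF Hmiss HX HY => [|n] IH Hjl Hju Hjn IHA IHF Hmiss HX HY.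
      have j0 : j = 0%N by have := P_ge j; lia.
      by subst j; move: Hju; rewrite P1.
    have := Xn_SS n; rewrite HX IHA => /eqP; rewrite eq_sym addr_eq0 => /eqP ->.
    have -> : (n.+2 - P j = (n.+1 - P j).+1)%N by lia.
    by rewrite exprS mulN1r mulNr.
  + by have := Yn_S n; rewrite HY IHF => /eqP; rewrite eq_sym subr_eq0 => /eqP.
-
  have Hj : P j = n.+1 by lia.
  case: j Hjl Hju Hjn Hj => [|i] Hjl Hju Hjn Hj; first by rewrite P0 in Hj.
  have := P_lt i => Hlt.
  have [IHA IHF] := IH i ltac:(lia).
  have HX : Xn n.+1 = (-1) ^+ i.+1 by rewrite Xn_P -Hj sumP_hit.
  have HY : Yn n.+1 = (-1) ^+ (i.+2)./2 by rewrite Yn_P -Hj sumP_hit.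
  rewrite Hj subnn expr0 mul1r; split.
  + case: n IH Hjl Hju Hjn Hj IHA IHF HX HY => [|n] IH Hjl Hju Hjn Hj IHA IHF HX HY.
      have i0 : i = 0%N by have := P_ge i; lia.
      subst i; have := Xn_1; rewrite HX => /eqP; rewrite eq_sym subr_eq => /eqP ->.
      by rewrite /al.
    have Hi0 : (0 < i)%N.
      case: i Hlt Hjl Hju Hjn Hj IHA IHF HX HY => // _ _ _ _ Hj; by rewrite P1 in Hj.
    have := Xn_SS n; rewrite HX IHA => E.
    have E2 : Af n.+2 = (-1) ^+ i.+1 - (-1) ^+ (n.+1 - P i) * al i by rewrite E addrK.
    rewrite E2 -L2 //; congr (_ - _ * _); congr (_ ^+ _).
    have := P_gap i; rewrite Hj; lia.
  + by have := Yn_S n; rewrite HY IHF => /eqP; rewrite eq_sym subr_eq => /eqP ->; rewrite L3.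
Qed.
Local Open Scope ring_scope.

Lemma P_closed k : (2 * P (k.*2) = k * (3 * k + 1))%N /\ (2 * P (k.*2.+1) = k.+1 * (3 * k + 2))%N.
Proof.
elim: k => [|k [IH1 IH2]]; first by [].
have E1 : P (k.+1).*2 = (P (k.*2.+1) + k.+1)%N.
  rewrite doubleS P_gap; have -> : odd (k.*2.+1) = true by lia.
  congr (_ + _)%N; lia.
have E2 : P (k.+1).*2.+1 = (P (k.+1).*2 + (k.+1).*2.+1)%N.
  rewrite P_gap; have -> : odd (k.+1).*2 = false by lia.
  by [].
split; rewrite ?E2 E1; nia.
Qed.

Lemma pent_pos k : pent (Posz k) = P (k.*2).
Proof.
rewrite /pent.
have -> : (Posz k * (3 * Posz k + 1))%R = Posz (2 * P (k.*2)).
  case: (P_closed k) => -> _; lia.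
by rewrite absz_nat mulKn.
Qed.

Lemma pent_neg k : pent (Negz k) = P (k.*2.+1).
Proof.
rewrite /pent.
have -> : (Negz k * (3 * Negz k + 1))%R = Posz (2 * P (k.*2.+1)).
  case: (P_closed k) => _ ->; rewrite NegzE; lia.
by rewrite absz_nat mulKn.
Qed.

Definition jm (m : int) : nat := match m with Posz k => k.*2 | Negz k => k.*2.+1 end.

Lemma pent_jm m : pent m = P (jm m).
Proof. by case: m => k; rewrite ?pent_pos ?pent_neg. Qed.

Lemma jm_surj j : exists m, jm m = j.
Proof.
have [k [->|->]] := par_cases j; first by exists (Posz k).
by exists (Negz k).
Qed.

Lemma T1 k : (0 < k)%N -> al (k.*2) - ph (k.*2).-1 = if odd k then 1 else -1.
Proof.
move=> Hk; rewrite /al /ph !sgbE.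
have -> : (k.*2 == 0%N) = false by apply/negbTE; lia.
have -> : odd (k.*2) = false by lia.
have -> : odd (k.*2).-1 = true by lia.
have -> : odd (k.*2)./2.+1 = ~~ odd k by lia.
by case: (odd k).
Qed.

Lemma T2 k : al (k.*2.+1) - ph (k.*2) = -1.
Proof.
rewrite /al /ph !sgbE.
have -> : (k.*2.+1 == 0%N) = false by [].
have -> : odd (k.*2) = false by lia.
have -> : odd (k.*2.+1) = true by lia.
have -> : odd (k.*2.+2)./2 = ~~ odd k by lia.
have -> : odd (k.*2)./2 = odd k by lia.
by case: (odd k).
Qed.

Lemma T3 k e : (0 < k)%N -> (-1) ^+ e * al (k.*2) - ph (k.*2) =
  if odd k && ~~ odd e then 2 else if ~~ odd k && ~~ odd e then -2 else 0.
Proof.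
move=> Hk; rewrite /al /ph !sgbE.
have -> : (k.*2 == 0%N) = false by apply/negbTE; lia.
have -> : odd (k.*2) = false by lia.
have -> : odd (k.*2)./2.+1 = ~~ odd k by lia.
have -> : odd (k.*2)./2 = odd k by lia.
by case: (odd k); case: (odd e).
Qed.

Lemma T4 k e : (-1) ^+ e * al (k.*2.+1) - ph (k.*2.+1) =
  if ~~ odd k.+1 then - 2 * (-1) ^+ e else 0.
Proof.
rewrite /al /ph !sgbE.
have -> : (k.*2.+1 == 0%N) = false by [].
have -> : odd (k.*2.+1) = true by lia.
have -> : odd (k.*2.+2)./2 = odd k.+1 by lia.
by case: (odd k.+1); case: (odd e).
Qed.
Local Open Scope ring_scope.

Theorem theorem1p7 (n : nat) (hn : (0 < n)%N) :
  let d : int := (Posz (Me n) - Posz (Mo n))%R in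
  (* n in P, with R(n) = m *)
  (forall m : int, n = pent m ->
     d = (if (0 < m)%R && odd `|m|%N then 1 else -1)%R) /\
  (* n not in P, floor_p(n) = pent m, i.e. R(floor_p n) = m *)
  ((~ exists m : int, n = pent m) ->
   forall m : int, (pent m <= n)%N ->
     (forall m' : int, (pent m' <= n)%N -> (pent m' <= pent m)%N) ->
     d = (if [&& odd `|m|%N, (0 < m)%R & odd n == odd (pent m)] then 2
          else if [&& ~~ odd `|m|%N, (0 < m)%R & odd n == odd (pent m)] then -2
          else if ~~ odd `|m|%N && (m < 0)%R then - 2 * (-1) ^+ (n - pent m)
          else 0)%R).
Proof.
case: n hn => [//|n] _ d.
have Hd : d = Af n.+1 - Ff n by rewrite /d D_U D_S.
split.
- move=> m Hm; rewrite Hd.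
  rewrite pent_jm in Hm.
  have Hlt := P_lt (jm m).
  have [HA _] := C (n := n.+1) (j := jm m) ltac:(lia).
  case E: (jm m) => [|j'] in Hm Hlt HA *; first by rewrite P0 in Hm.
  have Hlt' := P_lt j'.
  have [_ HF] := C (n := n) (j := j') ltac:(lia).
  rewrite HA HF -Hm subnn expr0 mul1r.
  case: m E {Hm} => k /= E.
  + have Hk : (0 < k)%N by lia.
    have -> : j' = (k.*2).-1 by rewrite E.
    rewrite E -E T1 // ltz_nat Hk /=.
    by [].
  + have -> : j' = k.*2 by lia.
    by rewrite T2.
- move=> Hnp m Hm Hmax; rewrite Hd.
  rewrite !pent_jm in Hm Hmax *.
  have Hup : (n.+1 < P (jm m).+1)%N.
    rewrite ltnNge; apply/negP => Hle.
    have [m' Hm'] := jm_surj (jm m).+1.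
    have := Hmax m'; rewrite pent_jm Hm' => /(_ Hle).
    by rewrite leqNgt P_lt.
  have Hne : P (jm m) != n.+1.
    apply/eqP => Hj; apply: Hnp; exists m; by rewrite pent_jm Hj.
  have [HA _] := C (n := n.+1) (j := jm m) ltac:(lia).
  have [_ HF] := C (n := n) (j := jm m) ltac:(lia).
  rewrite HA HF.
  have Hodd : (odd n.+1 == odd (P (jm m))) = ~~ odd (n.+1 - P (jm m)).
    rewrite oddB; last by lia.
    by case: (odd n.+1); case: (odd (P (jm m))).
  rewrite Hodd.
  case: m Hup Hne {Hm Hmax Hnp HA HF Hodd} => k /= Hup Hne.
  + case: k Hup Hne => [|k] Hup Hne.
      exfalso; move: Hup Hne; rewrite /= ?P1 ?P0; lia.
    rewrite T3 //.
    have -> : (0 < Posz k.+1)%R = true by [].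
    have -> : (Posz k.+1 < 0)%R = false by [].
    by case: (odd k.+1); case: (odd _).
  + have -> : (Negz k < 0)%R = true by [].
    rewrite (T4 k (n.+1 - P k.*2.+1)) /=.
    by case: (odd k).
Qed.
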